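(* Let $\Omega$ be a topological space and let $X$ be a locally convex topological vector space whose topology is given by a family $\mathfrak{A}$ of seminorms. Let $V \subset F(\Omega, \mathbb{R}_+)$, $A \subset C(\Omega, \mathbb{C})$, $W \subset F(\Omega, X)$ and $f \in F(\Omega, X)$. Assume $A$ is a multiplier of $W$ and that $f - g \in FV_{b}(\Omega, X)$ for every $g \in W$. Then for each $p \in \mathfrak{A}$ and $v \in V$ there is an $(A, v)$-antisymmetric $z$-filter $\mathcal{F}$ on $\Omega$ such that \[ \inf_{F \in \mathcal{F}} d_{v, p, F}(f, W) = d_{v, p, \Omega}(f, W). \] Moreover, $\mathcal{F}$ can be chosen maximal in the following sense: if $\mathcal{E}$ is a $z$-filter on $\Omega$ with $\mathcal{F} \subset \mathcal{E}$ and $\inf_{E \in \mathcal{E}} d_{v, p, E}(f, W) = d_{v, p, \Omega}(f, W)$, then $\mathcal{E} = \mathcal{F}$.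
   Context: Topological spaces are not assumed Hausdorff. $F(\Omega,X)$ denotes all functions $\Omega\to X$, $\mathbb{R}_+=[0,\infty)$. For $p\in\mathfrak{A}$, $v\in F(\Omega,\mathbb{R}_+)$, $f\in F(\Omega,X)$, $F\subset\Omega$: $|f|_{v,p,F}=\sup\{v(x)p(f(x)):x\in F\}$, and for $W\subset F(\Omega,X)$, $d_{v,p,F}(f,W)=\inf\{|f-g|_{v,p,F}:g\in W\}$. $FV_b(\Omega,X)=\{f\in F(\Omega,X): \sup_{x\in\Omega}v(x)p(f(x))<\infty \text{ for all } v\in V,\ p\in\mathfrak{A}\}$. A zero-set of $\Omega$ is a set $h^{-1}(0)$ with $h\in C(\Omega,\mathbb{R})$; $Z(\Omega)$ is the set of zero-sets. A $z$-filter on $\Omega$ is a nonempty $\mathcal{F}\subset Z(\Omega)$ with $\emptyset\notin\mathcal{F}$, closed under finite intersections, and such that $Z\in\mathcal{F}$, $Z'\in Z(\Omega)$, $Z\subset Z'$ imply $Z'\in\mathcal{F}$. For $v\in F(\Omega,\mathbb{R}_+)$, $\mathrm{supp}\, v$ is the closure of $\{x:v(x)\neq 0\}$. A $z$-filter $\mathcal{F}$ is $(A,v)$-antisymmetric if every $F\in\mathcal{F}$ meets $\mathrm{supp}\,v$ and, for each $\phi\in A$ with $\bigcap_{F\in\mathcal{F}}\overline{\phi(F\cap\mathrm{supp}\,v)}\subset[0,1]$ (closures taken in the one-point compactification $\mathbb{C}\cup\{\infty\}$), this intersection is a single point. A function $\varphi\in F(\Omega,\mathbb{C})$ is a multiplier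 of $W$ if $\varphi f+(1-\varphi)g\in W$ for all $f,g\in W$; $A$ is a multiplier of $W$ if each $\varphi\in A$ is. *)

(* Defs.v *)
From HB Require Import structures.
From mathcomp Require Import all_boot all_order all_algebra.
From mathcomp Require Import all_classical all_reals.
From mathcomp Require Import ereal topology normedtype one_point_compactification.
From mathcomp Require Import complex.

Set Implicit Arguments.
Unset Strict Implicit.
Unset Printing Implicit Defensive.

Import Order.TTheory GRing.Theory Num.Theory.
Import numFieldTopology.Exports numFieldNormedType.Exports.
Local Open Scope classical_set_scope.
Local Open Scope ring_scope.
Local Open Scope ereal_scope.
Local Open Scope ring_scope.
Local Open Scope complex_scope.

(** The complex numbers are [R[i]] for [R : realType]; their topology is
    the norm topology, obtained through the alias [(R[i])^o]. *)

Definition is_seminorm (R : realType) (X : lmodType R[i]) (p : X -> R) : Prop :=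
  (forall x y : X, p (x + y) <= p x + p y) /\
  (forall (a : R[i]) (x : X), (p (a *: x))%:C = `|a| * (p x)%:C).

Definition wsnorm (R : realType) (Omega : Type) (X : lmodType R[i])
  (v : Omega -> R) (p : X -> R) (F : set Omega) (h : Omega -> X) : \bar R :=
  ereal_sup ([set 0%E] `|` [set ((v x) * p (h x))%:E | x in F]).

Definition wdist (R : realType) (Omega : Type) (X : lmodType R[i])
  (v : Omega -> R) (p : X -> R) (F : set Omega) (f : Omega -> X)
  (W : set (Omega -> X)) : \bar R :=
  ereal_inf [set wsnorm v p F (fun x => f x - g x) | g in W].

Definition FVb (R : realType) (Omega : Type) (X : lmodType R[i])
  (V : set (Omega -> R)) (AA : set (X -> R)) : set (Omega -> X) :=
  [set h | forall v p, V v -> AA p ->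
     (ereal_sup [set ((v x) * p (h x))%:E | x in [set: Omega]] < +oo)%E].

Definition zero_sets (R : realType) (Omega : topologicalType) : set (set Omega) :=
  [set h @^-1` [set 0] | h in [set h : Omega -> R | continuous h]].

Definition is_zfilter (R : realType) (Omega : topologicalType)
  (FF : set (set Omega)) : Prop :=
  [/\ FF `<=` @zero_sets R Omega, FF !=set0, ~ FF set0,
      (forall Z1 Z2, FF Z1 -> FF Z2 -> FF (Z1 `&` Z2)) &
      (forall Z Z', FF Z -> @zero_sets R Omega Z' -> Z `<=` Z' -> FF Z')].

Definition supp (R : realType) (Omega : topologicalType) (v : Omega -> R) :
  set Omega := closure [set x | v x != 0].

Definition to_opc (R : realType) (z : R[i]) :
  one_point_compactification (R[i])^o := Some (z : (R[i])^o).

Definition continuousC (R : realType) (Omega : topologicalType)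
  (phi : Omega -> R[i]) : Prop := continuous (phi : Omega -> (R[i])^o).

Definition Av_antisymmetric (R : realType) (Omega : topologicalType)
  (A : set (Omega -> R[i])) (v : Omega -> R) (FF : set (set Omega)) : Prop :=
  (forall F, FF F -> F `&` supp v !=set0) /\
  (forall phi, A phi ->
     let I := \bigcap_(F in FF)
                closure (@to_opc R @` (phi @` (F `&` supp v))) in
     I `<=` [set @to_opc R (r%:C) | r in [set r : R | 0 <= r <= 1]] ->
     exists c, I = [set c]).

Definition is_multiplier (R : realType) (Omega : Type) (X : lmodType R[i])
  (W : set (Omega -> X)) (phi : Omega -> R[i]) : Prop :=
  forall f g, W f -> W g -> W (fun x => phi x *: f x + (1 - phi x) *: g x).

(* Main.v *)
Require Import Defs.
From HB Require Import structures.
From mathcomp Require Import all_boot all_order all_algebra.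
From mathcomp Require Import all_classical all_reals.
From mathcomp Require Import ereal topology normedtype one_point_compactification.
From mathcomp Require Import complex.
From mathcomp Require Import sequences.
From mathcomp Require Import ring lra.

Import Order.TTheory GRing.Theory Num.Theory.
Import numFieldTopology.Exports numFieldNormedType.Exports.
Local Open Scope classical_set_scope.
Local Open Scope ring_scope.


Module Aux.
Local Open Scope classical_set_scope.
Local Open Scope ring_scope.
Section Basics.
Context (R : realType) (Omega : Type) (X : lmodType R[i]).
Implicit Types (v : Omega -> R) (p : X -> R) (F G : set Omega) (h : Omega -> X).

Lemma wsnorm_ge0 v p F h : (0 <= wsnorm v p F h)%E.
Proof. by apply: ereal_sup_ubound; left. Qed.

Lemma wsnorm_le v p F G h : F `<=` G -> (wsnorm v p F h <= wsnorm v p G h)%E.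
Proof.
move=> FG; apply: ereal_sup_le => y [->|[x Fx <-]]; [by left|right].
by exists x => //; apply: FG.
Qed.

Lemma wsnorm_ub v p F h x : F x -> (((v x) * p (h x))%:E <= wsnorm v p F h)%E.
Proof. by move=> Fx; apply: ereal_sup_ubound; right; exists x. Qed.

Lemma wsnorm_leP v p F h (s : R) : 0 <= s ->
  (forall x, F x -> v x * p (h x) <= s) -> (wsnorm v p F h <= s%:E)%E.
Proof.
move=> s0 H; apply: ge_ereal_sup => y [->|[x Fx <-]]; first by rewrite lee_fin.
by rewrite lee_fin; apply: H.
Qed.

Lemma wdist_ge0 v p F f W : (0 <= wdist v p F f W)%E.
Proof. by apply: le_ereal_inf_tmp => y [g _ <-]; apply: wsnorm_ge0. Qed.

Lemma wdist_le v p F G f W : F `<=` G -> (wdist v p F f W <= wdist v p G f W)%E.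
Proof.
move=> FG; apply: le_ereal_inf_tmp => y [g Wg <-].
apply: (le_trans (ereal_inf_lbound _)); first by exists g.
exact: wsnorm_le. Qed.

Lemma wdist_lb v p F f W g : W g ->
  (wdist v p F f W <= wsnorm v p F (fun x => (f x - g x)%R))%E.
Proof. by move=> Wg; apply: ereal_inf_lbound; exists g. Qed.

Lemma wdist_lt v p F f W (D : \bar R) : (wdist v p F f W < D)%E ->
  exists2 g, W g & (wsnorm v p F (fun x => (f x - g x)%R) < D)%E.
Proof. by move/ereal_inf_lt => [y [g Wg <-]] H; exists g. Qed.

Lemma wdist_empty v p F f W : W = set0 -> wdist v p F f W = +oo%E.
Proof.
move=> ->; rewrite /wdist; apply/ereal_inf_pinfty => y [g] //.
Qed.

End Basics.
Section Zero.
Context (R : realType) (Omega : topologicalType).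
Local Notation Z := (@zero_sets R Omega).

Lemma zsT : Z setT.
Proof.
exists (fun=> 0); first exact: cst_continuous.
by apply/seteqP; split => x //=.
Qed.

Lemma contD (h1 h2 : Omega -> R) : continuous h1 -> continuous h2 ->
  continuous (fun x => h1 x + h2 x).
Proof. by move=> c1 c2 x; exact: (continuousD (c1 x) (c2 x)). Qed.

Lemma contN (h1 : Omega -> R) : continuous h1 -> continuous (fun x => - h1 x).
Proof. by move=> c1 x; exact: (continuousN (c1 x)). Qed.

Lemma contNorm (h1 : Omega -> R) : continuous h1 -> continuous (fun x => `|h1 x|).
Proof.
move=> c1 x; apply: (continuous_comp (c1 x)); exact: norm_continuous.
Qed.

Lemma zsI Z1 Z2 : Z Z1 -> Z Z2 -> Z (Z1 `&` Z2).
Proof.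
move=> [h1 c1 <-] [h2 c2 <-].
exists (fun x => `|h1 x| + `|h2 x|); first by apply: contD; apply: contNorm.
apply/seteqP; split => x /=.
  move/eqP; rewrite paddr_eq0 ?normr_ge0 // !normr_eq0 => /andP[/eqP -> /eqP ->].
  by split.
by move=> [-> ->]; rewrite normr0 addr0.
Qed.

Lemma contBc (h1 : Omega -> R) c : continuous h1 -> continuous (fun x => h1 x - c).
Proof. by move=> c1; apply: contD => //; exact: cst_continuous. Qed.

Lemma zs_le (k : Omega -> R) (c : R) : continuous k -> Z [set x | k x <= c].
Proof.
move=> ck; exists (fun x => (k x - c) + `|k x - c|).
  by apply: contD; [|apply: contNorm]; apply: contBc.
apply/seteqP; split => x /=.
  have [y0|y0] := leP (k x - c) 0; first by rewrite -subr_le0.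
  by rewrite gtr0_norm // => /eqP; rewrite -mulr2n mulrn_eq0 /= (gt_eqF y0).
by rewrite -subr_le0 => y0; rewrite ler0_norm // subrr.
Qed.

Lemma zs_ge (k : Omega -> R) (c : R) : continuous k -> Z [set x | c <= k x].
Proof.
move=> ck; have := @zs_le _ (- c) (contN _ ck).
by congr Z; apply/seteqP; split => x /=; rewrite lerN2.
Qed.

Lemma zs_level (h : Omega -> R) x0 : continuous h -> Z [set x | h x = h x0].
Proof.
move=> ch; exists (fun x => h x - h x0); first exact: contBc.
by apply/seteqP; split => x /=; [move/eqP; rewrite subr_eq0 => /eqP|move->; rewrite subrr].
Qed.

End Zero.
Section Mult.
Context (R : realType) (Omega : Type) (X : lmodType R[i]) (W : set (Omega -> X)).

Lemma mult_one : is_multiplier W (fun=> 1).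
Proof.
move=> f g Wf Wg; suff -> : (fun x => 1 *: f x + (1 - 1) *: g x) = f by [].
by apply: funext => x; rewrite subrr scale0r addr0 scale1r.
Qed.

Lemma mult_mul (a b : Omega -> R[i]) : is_multiplier W a -> is_multiplier W b ->
  is_multiplier W (fun x => a x * b x).
Proof.
move=> ma mb f g Wf Wg; have := ma _ _ (mb _ _ Wf Wg) Wg.
congr W; apply: funext => x.
rewrite scalerDr !scalerA -addrA -scalerDl; congr (_ + _ *: _); ring.
Qed.

Lemma mult_sub (a : Omega -> R[i]) : is_multiplier W a ->
  is_multiplier W (fun x => 1 - a x).
Proof.
move=> ma f g Wf Wg; have := ma _ _ Wg Wf.
congr W; apply: funext => x; rewrite addrC; congr (_ + _ *: _); ring.
Qed.

Lemma mult_pow (a : Omega -> R[i]) k : is_multiplier W a ->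
  is_multiplier W (fun x => a x ^+ k).
Proof.
move=> ma; elim: k => [|k IH]; first exact: mult_one.
have := mult_mul _ _ ma IH; congr is_multiplier; apply: funext => x; by rewrite exprS.
Qed.

Lemma mult_psi (a : Omega -> R[i]) n m : is_multiplier W a ->
  is_multiplier W (fun x => (1 - a x ^+ n) ^+ m).
Proof.
move=> ma; apply: (@mult_pow (fun x => 1 - a x ^+ n)); apply: mult_sub; exact: mult_pow.
Qed.
End Mult.
Local Open Scope complex_scope.
Section Cplx.
Context (R : realType).

Lemma ReB (a b : R[i]) : complex.Re (a - b) = complex.Re a - complex.Re b.
Proof. by case: a => a1 a2; case: b. Qed.

Lemma ReC (t : R) : complex.Re (t%:C) = t.
Proof. by []. Qed.

Lemma normRe (z : R[i]) : (`|complex.Re z|)%:C <= `|z|.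
Proof.
rewrite normc_def lecR -sqrtr_sqr ler_sqrt; last by rewrite addr_ge0 // sqr_ge0.
by rewrite lerDl sqr_ge0.
Qed.

Lemma normRe_lt (z : R[i]) (e : R) : `|z| < e%:C -> `|complex.Re z| < e.
Proof. by move=> H; rewrite -ltcR; apply: le_lt_trans H; apply: normRe. Qed.

Lemma cont_Re (Omega : topologicalType) (phi : Omega -> R[i]) :
  continuousC phi -> continuous (fun x => complex.Re (phi x)).
Proof.
move=> cphi x; apply/cvgrPdist_lt => e e0.
have := (cvgrPdist_lt _ _).1 (cphi x) e%:C; rewrite ltcR => /(_ _ e0).
apply: filterS => y H; rewrite -ReB; exact: normRe_lt.
Qed.
End Cplx.
Section Opc.
Context (R : realType).
Local Notation opc := (one_point_compactification (R[i])^o).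

Lemma closure_opc (S : set R[i]) (t : R[i]) :
  closure (@to_opc R @` S) (to_opc t) ->
  forall e : R, 0 < e -> exists z, S z /\ `|t - z| < e%:C.
Proof.
move=> H e e0.
have nb : nbhs (to_opc t) (Some @` (ball (t : (R[i])^o) e%:C)).
  apply: one_point_compactification_some_nbhs; apply: nbhsx_ballx.
  by rewrite ltcR.
have [c [[z Sz <-] [w Bw /= [wz]]]] := H _ nb.
exists z; split => //; move: Bw; rewrite wz -ball_normE /=. done.
Qed.

Lemma opc_cluster (I : Type) (D : set I) (B : I -> set opc) :
  (exists i, D i) ->
  (forall i j, D i -> D j -> exists2 k, D k & B k `<=` B i `&` B j) ->
  (forall i, D i -> B i !=set0) ->
  exists c, forall i, D i -> closure (B i) c.
Proof.
move=> D0 DI DN.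
have FF : Filter (filter_from D B) by apply: filter_from_filter.
have PF : ProperFilter (filter_from D B) by apply: filter_from_proper.
have [|c [_ cl]] := @one_point_compactification_compact _ _ PF.
  by case: D0 => i Di; exists i.
exists c => i Di N Nc; apply: cl => //; by exists i.
Qed.
End Opc.

Lemma pow_diff (K : numDomainType) (a b c : K) (k : nat) :
  `|a| <= c -> `|b| <= c ->
  `|a ^+ k.+1 - b ^+ k.+1| <= (k.+1)%:R * c ^+ k * `|a - b|.
Proof.
move=> ac bc; have c0 : 0 <= c by apply: le_trans ac.
elim: k => [|k IH]; first by rewrite expr0 mulr1 mul1r !expr1.
have -> : a ^+ k.+2 - b ^+ k.+2 = a * (a ^+ k.+1 - b ^+ k.+1) + (a - b) * b ^+ k.+1.
  by rewrite !exprS; ring.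
apply: (le_trans (ler_normD _ _)); rewrite !normrM.
have H1 : `|a| * `|a ^+ k.+1 - b ^+ k.+1| <= c * ((k.+1)%:R * c ^+ k * `|a - b|).
  by apply: ler_pM => //; apply: normr_ge0.
have H2 : `|a - b| * `|b ^+ k.+1| <= `|a - b| * c ^+ k.+1.
  by apply: ler_wpM2l => //; rewrite normrX; apply: lerXn2r => //; rewrite ?nnegrE.
apply: (le_trans (lerD H1 H2)).
rewrite le_eqVlt; apply/orP; left; apply/eqP.
rewrite -[(k.+2)%:R]natr1 exprS; ring.
Qed.
Section RealPoly.
Context (R : realType).

Lemma bernoulli (u : R) (m : nat) : -1 <= u -> 1 + m%:R * u <= (1 + u) ^+ m.
Proof.
move=> u1; elim: m => [|m IH]; first by rewrite mul0r addr0 expr0.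
rewrite exprS -natr1.
have h1 : 0 <= 1 + u by lra.
have h2 : (1 + u) * (1 + m%:R * u) <= (1 + u) * (1 + u) ^+ m by apply: ler_wpM2l.
have h3 : 0 <= m%:R * u ^+ 2 :> R by apply: mulr_ge0 => //; apply: sqr_ge0.
set P := (1 + u) ^+ m in IH h2 *.
have e : (1 + u) * (1 + m%:R * u) = 1 + (m%:R + 1) * u + m%:R * u ^+ 2 by ring.
lra.
Qed.

Lemma bern_lo (u : R) (m : nat) : 0 <= u <= 1 -> 1 - m%:R * u <= (1 - u) ^+ m.
Proof.
move=> /andP[u0 u1]; have := @bernoulli (- u) m.
by rewrite mulrN; apply; lra.
Qed.

Lemma bern_hi (w : R) (m : nat) : 0 <= w <= 1 -> (1 - w) ^+ m * (1 + m%:R * w) <= 1.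
Proof.
move=> /andP[w0 w1].
have h1 : 1 + m%:R * w <= (1 + w) ^+ m by apply: bernoulli; lra.
have h2 : 0 <= (1 - w) ^+ m by apply: exprn_ge0; lra.
apply: (le_trans (ler_wpM2l h2 h1)); rewrite -exprMn.
apply: exprn_ile1; nra.
Qed.
End RealPoly.
Section RealPoly2.
Context (R : realType).

Lemma pow_small (r e : R) : 0 <= r < 1 -> 0 < e ->
  exists N, forall n, (N <= n)%N -> r ^+ n < e.
Proof.
move=> /andP[r0 r1] e0.
have := (cvgrPdist_lt _ _).1 (@cvg_expr R r _) e e0.
rewrite ger0_norm //; move=> /(_ _ r1) [N _ HN].
exists N => n Nn; have := HN n Nn; rewrite sub0r normrN ger0_norm //.
exact: exprn_ge0.
Qed.

Lemma poly_choice (s1 s2 eta : R) : 0 < s1 -> s1 < s2 -> s2 <= 1 -> 0 < eta ->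
  exists n m : nat, [/\ (0 < n)%N, (0 < m)%N,
    (forall t, 0 <= t <= s1 -> 1 - eta <= (1 - t ^+ n) ^+ m) &
    (forall t, s2 <= t <= 1 -> (1 - t ^+ n) ^+ m <= eta)].
Proof.
move=> s10 s12 s21 eta0.
have s20 : 0 < s2 by apply: lt_trans s12.
have q1 : 0 <= s1 / s2 < 1.
  by rewrite divr_ge0 ?ltW //= ltr_pdivrMr // mul1r.
have q2 : 0 < eta ^+ 2 / 2 by rewrite divr_gt0 // exprn_gt0.
have [N1 H1] := pow_small _ _ q1 q2.
have q3 : 0 <= s1 < 1 by rewrite ltW //=; apply: lt_le_trans s21.
have q4 : 0 < eta / 2 by rewrite divr_gt0.
have [N2 H2] := pow_small _ _ q3 q4.
pose n := (maxn N1 N2).+1.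
have {H1}H1 : (s1 / s2) ^+ n < eta ^+ 2 / 2.
  by apply: H1; rewrite /n; apply: leqW; apply: leq_maxl.
have {H2}H2 : s1 ^+ n < eta / 2.
  by apply: H2; rewrite /n; apply: leqW; apply: leq_maxr.
have w0 : 0 < s2 ^+ n by apply: exprn_gt0.
pose x := 1 / (eta * s2 ^+ n).
have x0 : 0 <= x by rewrite divr_ge0 // ltW // mulr_gt0.
pose m := (Num.trunc x).+1.
have hm1 : x < m%:R by apply: truncnS_gt.
have hm2 : m%:R <= x + 1.
  by rewrite /m -natr1 lerD2r; have /andP[] := truncn_itv x0.
have n0 : (0 < n)%N by [].
have m0 : (0 < m)%N by [].
clearbody m n.
exists n, m; split => //.
- move=> t /andP[t0 t1].
  have tn : t ^+ n <= s1 ^+ n by apply: lerXn2r => //; rewrite nnegrE ltW.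
  have s1n1 : s1 ^+ n <= 1 by apply: exprn_ile1; apply: ltW => //; apply: lt_le_trans s21.
  have tn0 : 0 <= t ^+ n by apply: exprn_ge0.
  have e1 : (1 - s1 ^+ n) ^+ m <= (1 - t ^+ n) ^+ m.
    by apply: lerXn2r; rewrite ?nnegrE; lra.
  have e2 : 1 - m%:R * s1 ^+ n <= (1 - s1 ^+ n) ^+ m.
    by apply: bern_lo; rewrite s1n1 andbT; apply: exprn_ge0; apply: ltW.
  have e3 : m%:R * s1 ^+ n <= (x + 1) * s1 ^+ n.
    by apply: ler_wpM2r => //; apply: exprn_ge0; apply: ltW.
  have e4 : x * s1 ^+ n = (s1 / s2) ^+ n / eta.
    rewrite /x exprMn exprVn; field.
    by rewrite !gt_eqF.
  have e5 : (s1 / s2) ^+ n / eta < eta / 2.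
    rewrite ltr_pdivrMr //; apply: (lt_le_trans H1); rewrite le_eqVlt; apply/orP; left.
    by apply/eqP; rewrite expr2; field.
  lra.
- move=> t /andP[t0 t1].
  have t00 : 0 <= t by apply: le_trans t0; apply: ltW.
  have tn : s2 ^+ n <= t ^+ n by apply: lerXn2r => //; rewrite nnegrE ltW.
  have tn1 : t ^+ n <= 1 by apply: exprn_ile1.
  have e1 : (1 - t ^+ n) ^+ m <= (1 - s2 ^+ n) ^+ m.
    by apply: lerXn2r; rewrite ?nnegrE; lra.
  have sn1 : s2 ^+ n <= 1 by apply: exprn_ile1 => //; apply: ltW.
  have e2 := @bern_hi R (s2 ^+ n) m.
  have {e2} e2 : (1 - s2 ^+ n) ^+ m * (1 + m%:R * s2 ^+ n) <= 1.
    by apply: e2; rewrite ltW.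
  have e3 : 1 <= m%:R * s2 ^+ n * eta.
    have : x * (s2 ^+ n * eta) = 1 by rewrite /x; field; rewrite ?gt_eqF.
    have : x * (s2 ^+ n * eta) <= m%:R * (s2 ^+ n * eta).
      by apply: ler_wpM2r; [apply: mulr_ge0; apply: ltW|apply: ltW].
    by rewrite mulrA; lra.
  set X := (1 - s2 ^+ n) ^+ m in e1 e2.
  have X0 : 0 <= X by apply: exprn_ge0; lra.
  set Y := m%:R * s2 ^+ n in e2 e3.
  have : X * 1 <= X * (Y * eta) by apply: ler_wpM2l.
  have : X * Y * eta <= eta * 1.
    rewrite mulrC; apply: ler_wpM2l; first exact: ltW.
    apply: le_trans e2; rewrite mulrDr mulr1 lerDr; exact: X0.
  nra.
Qed.
End RealPoly2.
Section CPoly.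
Context (R : realType).

Definition Kr (n' m' : nat) : R :=
  (m'.+1)%:R * (1 + 2 ^+ n'.+1) ^+ m' * ((n'.+1)%:R * 2 ^+ n').

Lemma Kr_ge0 n' m' : 0 <= Kr n' m'.
Proof.
have h2 : 0 <= (2 : R) ^+ n' by apply: exprn_ge0.
have h3 : 0 <= (1 + 2 ^+ n'.+1 : R) ^+ m'.
  by apply: exprn_ge0; apply: addr_ge0 => //; apply: exprn_ge0.
by rewrite /Kr !mulr_ge0.
Qed.

Lemma poly_cont (n' m' : nat) (z : R[i]) (t d : R) :
  0 <= t <= 1 -> `|z - t%:C| <= d%:C -> d <= 1 ->
  `|(1 - z ^+ n'.+1) ^+ m'.+1 - ((1 - t ^+ n'.+1) ^+ m'.+1)%:C|
    <= (Kr n' m' * d)%:C.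
Proof.
move=> /andP[t0 t1] zt d1.
have tC : `|t%:C| <= 1.
  by rewrite normc_def /= expr0n /= addr0 sqrtr_sqr ger0_norm // lecR.
have z2 : `|z| <= 2.
  have -> : z = t%:C + (z - t%:C) by rewrite addrC subrK.
  apply: (le_trans (ler_normD _ _)); rewrite -[2]/(1 + 1).
  by apply: lerD => //; apply: (le_trans zt); rewrite -[1]/(1%:C) lecR.
have t2 : `|t%:C| <= 2 by apply: (le_trans tC); rewrite ler1n.
have h1 := @pow_diff _ _ _ _ n' z2 t2.
have -> : ((1 - t ^+ n'.+1) ^+ m'.+1)%:C = (1 - t%:C ^+ n'.+1) ^+ m'.+1.
  by rewrite rmorphXn rmorphB rmorph1 rmorphXn.
have a2 : `|1 - z ^+ n'.+1| <= 1 + 2 ^+ n'.+1.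
  apply: (le_trans (ler_normB _ _)); rewrite normr1 lerD2l normrX.
  by apply: lerXn2r => //; rewrite nnegrE.
have b2 : `|1 - t%:C ^+ n'.+1| <= 1 + 2 ^+ n'.+1.
  apply: (le_trans (ler_normB _ _)); rewrite normr1 lerD2l normrX.
  by apply: lerXn2r => //; rewrite ?nnegrE //; apply: le_trans t2.
have h2 := @pow_diff _ _ _ _ m' a2 b2.
apply: (le_trans h2).
have -> : 1 - z ^+ n'.+1 - (1 - t%:C ^+ n'.+1) = - (z ^+ n'.+1 - t%:C ^+ n'.+1).
  by ring.
rewrite normrN.
have c1 : 0 <= (m'.+1)%:R * (1 + 2 ^+ n'.+1) ^+ m' :> R[i].
  by apply: mulr_ge0 => //; apply: exprn_ge0; apply: addr_ge0 => //; apply: exprn_ge0.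
have c2 : 0 <= (n'.+1)%:R * 2 ^+ n' :> R[i] by apply: mulr_ge0 => //; apply: exprn_ge0.
apply: (le_trans (ler_wpM2l c1 (le_trans h1 (ler_wpM2l c2 zt)))).
rewrite le_eqVlt; apply/orP; left; apply/eqP.
rewrite /Kr !rmorphM !rmorph_nat rmorphXn rmorphD rmorph1 !rmorphXn rmorph_nat.
by rewrite !mulrA.
Qed.
End CPoly.
Section Semi.
Context (R : realType) (X : lmodType R[i]) (p : X -> R) (hp : is_seminorm p).

Definition nr (z : R[i]) : R := Num.sqrt (complex.Re z ^+ 2 + complex.Im z ^+ 2).

Lemma nrE (z : R[i]) : `|z| = (nr z)%:C.
Proof. exact: normc_def. Qed.

Lemma nr_ge0 z : 0 <= nr z.
Proof. exact: sqrtr_ge0. Qed.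

Lemma semi_hom (a : R[i]) (x : X) : p (a *: x) = nr a * p x.
Proof.
have := hp.2 a x; rewrite nrE -rmorphM; exact: complexI.
Qed.

Lemma semi_add (x y : X) : p (x + y) <= p x + p y.
Proof. exact: hp.1. Qed.

Lemma nr0 : nr 0 = 0.
Proof. by apply: complexI; rewrite -nrE normr0. Qed.

Lemma nrN1 : nr (-1) = 1.
Proof. by apply: complexI; rewrite -nrE normrN normr1. Qed.

Lemma semi_ge0 x : 0 <= p x.
Proof.
have p0 : p 0 = 0 by rewrite -(scale0r 0) semi_hom nr0 mul0r.
have := semi_add x ((-1) *: x); rewrite semi_hom nrN1 mul1r scaleN1r subrr p0.
lra.
Qed.

Lemma semi_conv (a : R[i]) (y1 y2 : X) :
  p (a *: y1 + (1 - a) *: y2) <= nr a * p y1 + nr (1 - a) * p y2.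
Proof. by rewrite -!semi_hom; apply: semi_add. Qed.
End Semi.

Section Arith.
Context (R : realType).

Lemma q_bounds (t : R) n m : 0 <= t <= 1 -> 0 <= (1 - t ^+ n) ^+ m <= 1.
Proof.
move=> /andP[t0 t1].
have tn0 : 0 <= t ^+ n by apply: exprn_ge0.
have tn1 : t ^+ n <= 1 by apply: exprn_ile1.
by rewrite exprn_ge0 ?exprn_ile1 //; lra.
Qed.

Lemma ar1 (t re dl d0 a : R) : t - dl < re -> re < a + 2 * d0 -> dl <= d0 ->
  t <= a + 3 * d0.
Proof. lra. Qed.

Lemma ar2 (t re dl d0 b : R) : re < t + dl -> b - 2 * d0 < re -> dl <= d0 ->
  b - 3 * d0 <= t.
Proof. lra. Qed.

Lemma ar3 (re a b d0 : R) : re < a + 2 * d0 -> b - a = 8 * d0 -> 0 < d0 ->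
  re <= b - 2 * d0.
Proof. lra. Qed.

Lemma ar4 (re a b d0 : R) : b - 2 * d0 < re -> b - a = 8 * d0 -> 0 < d0 ->
  a + 2 * d0 <= re.
Proof. lra. Qed.

Lemma pw_final (E al1 al2 e1 e2 q eta r M re t1 t2 : R) :
  E <= al1 * e1 + al2 * e2 -> 0 <= al1 -> 0 <= al2 -> al1 <= q + eta ->
  al2 <= 1 - q + eta ->
  0 <= e1 -> 0 <= e2 -> e1 <= M -> e2 <= M -> 0 <= q -> q <= 1 -> 0 < eta ->
  0 <= r -> 0 <= M ->
  (re < t1 -> 1 - eta <= q /\ e1 <= r) ->
  (t2 < re -> q <= eta /\ e2 <= r) ->
  (t1 <= re -> re <= t2 -> e1 <= r /\ e2 <= r) ->
  E <= (1 + 2 * eta) * r + 2 * eta * M.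
Proof.
move=> hE al10 al20 h1 h2 e10 e20 e1M e2M q0 q1 eta0 r0 M0 hlo hhi hmid.
have etar : 0 <= eta * r by apply: mulr_ge0 => //; apply: ltW.
have [lo|nlo] := ltrP re t1.
  have [ql e1r] := hlo lo.
  have a1 : al1 <= 1 + eta by lra.
  have a2 : al2 <= 2 * eta by lra.
  have p1 : al1 * e1 <= (1 + eta) * r by apply: ler_pM.
  have p2 : al2 * e2 <= (2 * eta) * M by apply: ler_pM.
  lra.
have [hi|nhi] := ltrP t2 re.
  have [qh e2r] := hhi hi.
  have a1 : al1 <= 2 * eta by lra.
  have a2 : al2 <= 1 + eta by lra.
  have p1 : al1 * e1 <= (2 * eta) * M by apply: ler_pM.
  have p2 : al2 * e2 <= (1 + eta) * r by apply: ler_pM.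
  lra.
have [e1r e2r] := hmid nlo nhi.
have p1 : al1 * e1 <= al1 * r by apply: ler_wpM2l.
have p2 : al2 * e2 <= al2 * r by apply: ler_wpM2l.
have p3 : (al1 + al2) * r <= (1 + 2 * eta) * r by apply: ler_wpM2r => //; lra.
have etaM : 0 <= eta * M by apply: mulr_ge0 => //; apply: ltW.
lra.
Qed.
End Arith.

Local Open Scope complex_scope.
Section Main.
Context (R : realType) (Omega : topologicalType)
  (X : lmodType R[i]) (AA : set (X -> R))
  (V : set (Omega -> R)) (A : set (Omega -> R[i]))
  (W : set (Omega -> X)) (f : Omega -> X).
Hypothesis Hsemi : forall p, AA p -> is_seminorm p.
Hypothesis Hv : forall v, V v -> forall x, 0 <= v x.
Hypothesis Hcont : forall phi, A phi -> continuousC phi.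
Hypothesis Hmult : forall phi, A phi -> is_multiplier W phi.
Hypothesis HFV : forall g, W g -> FVb V AA (fun x => f x - g x).
Context (p : X -> R) (v : Omega -> R) (Ap : AA p) (Vv : V v).

Local Notation d F := (wdist v p F f W).
Local Notation D := (wdist v p setT f W).
Local Notation Z := (@zero_sets R Omega).

Lemma bndM g : W g -> exists M : R, 0 <= M /\ forall x, v x * p (f x - g x) <= M.
Proof.
move=> Wg; have := HFV _ Wg v p Vv Ap.
set S := ereal_sup _ => HS.
have ub : forall x, ((v x * p (f x - g x))%:E <= S)%E.
  by move=> x; apply: ereal_sup_ubound; exists x.
move: HS ub; case: S => [r||] // _ ub.
- exists (Num.max r 0); split; first by rewrite le_max lexx orbT.
  by move=> x; have := ub x; rewrite lee_fin => /le_trans; apply; rewrite le_max lexx.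
- by exists 0; split => // x; have := ub x.
Qed.

Lemma vx_ge0 x : 0 <= v x. Proof. exact: Hv. Qed.
Lemma p_ge0 y : 0 <= p y. Proof. exact: (semi_ge0 _ _ _ (Hsemi _ Ap) y). Qed.

Lemma D_fin g : W g -> exists Dr : R, D = Dr%:E.
Proof.
move=> Wg; have [M [M0 HM]] := bndM _ Wg.
have h1 : (D <= M%:E)%E.
  apply: (le_trans (@wdist_lb _ _ _ v p setT f W g Wg)); apply: wsnorm_leP => // x _; exact: HM.
have h0 := @wdist_ge0 _ _ _ v p setT f W.
move: h0 h1; case: D => [r||] //; by exists r.
Qed.

Lemma D_inf_W : D = +oo%E -> W = set0.
Proof.
move=> Doo; apply/seteqP; split => // g Wg; have [Dr] := D_fin _ Wg.
by rewrite Doo.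
Qed.


Section Anti.
Context (FF : set (set Omega)) (zFF : is_zfilter R FF)
  (lbFF : forall F, FF F -> (D <= d F)%E)
  (meetFF : forall F, FF F -> F `&` supp v !=set0)
  (maxFF : forall EE, is_zfilter R EE -> FF `<=` EE ->
     (forall E, EE E -> (D <= d E)%E) -> EE = FF).

Lemma FF_Z F : FF F -> Z F. Proof. by case: zFF => H *; apply: H. Qed.
Lemma FF_I F G : FF F -> FF G -> FF (F `&` G). Proof. by case: zFF => *; auto. Qed.
Lemma FF_up F G : FF F -> Z G -> F `<=` G -> FF G.
Proof. by case: zFF => _ _ _ _ H; apply: H. Qed.
Lemma FF_T : FF setT.
Proof. by case: zFF => _ [F0 FF0] _ _ H; apply: (H F0) => //; apply: zsT. Qed.

Lemma claim (Z' : set Omega) : Z Z' -> (forall F, FF F -> F `&` Z' !=set0) ->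
  ~ FF Z' -> exists2 F, FF F & (d (F `&` Z') < D)%E.
Proof.
move=> ZZ' ne nFF; apply: contrapT => H.
pose EE := [set E | Z E /\ exists2 F, FF F & F `&` Z' `<=` E].
have zEE : is_zfilter R EE.
  split.
  - by move=> E [].
  - by exists setT; split; [apply: zsT|exists setT => //; apply: FF_T].
  - by move=> [_ [F FF0 sub]]; have [x Fx] := ne _ FF0; apply: sub x Fx.
  - move=> E1 E2 [ZE1 [F1 FF1 s1]] [ZE2 [F2 FF2 s2]]; split; first exact: zsI.
    exists (F1 `&` F2); first exact: FF_I.
    by move=> x [[F1x F2x] Z'x]; split; [apply: s1|apply: s2].
  - by move=> E E' [_ [F FF0 s]] ZE' EE'; split => //; exists F => // x /s /EE'.
have sub : FF `<=` EE.
  by move=> F FF0; split; [exact: FF_Z|exists F => // x []].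
have lb : forall E, EE E -> (D <= d E)%E.
  move=> E [_ [F FF0 s]]; apply: (le_trans _ (@wdist_le _ _ _ v p _ _ f W s)).
  by rewrite leNgt; apply/negP => H'; apply: H; exists F.
have eq := maxFF _ zEE sub lb; apply: nFF; rewrite -eq; split => //.
by exists setT; [apply: FF_T|move=> x []].
Qed.


Lemma nearI (phi : Omega -> R[i]) (c : R) G e :
  (forall G, FF G -> closure (@to_opc R @` (phi @` (G `&` supp v))) (to_opc c%:C)) ->
  FF G -> 0 < e -> exists x, [/\ G x, supp v x & `|c%:C - phi x| < e%:C].
Proof.
move=> H FG e0; have [z [[x [Gx sx] <-] hz]] := @closure_opc _ _ _ (H G FG) _ e0.
by exists x.
Qed.

Lemma re_close (c : R) (z : R[i]) e : `|c%:C - z| < e%:C ->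
  c - e < complex.Re z < c + e.
Proof.
move=> H; have := normRe_lt _ _ _ H; rewrite ReB ReC => H'.
by rewrite -ltr_distlC.
Qed.

Lemma fin_lt (y : \bar R) (Dr : R) : (0 <= y)%E -> (y < Dr%:E)%E ->
  exists r, y = r%:E /\ 0 <= r < Dr.
Proof. by case: y => // r; rewrite !lee_fin !lte_fin => h0 h1; exists r; rewrite h0 h1. Qed.


Lemma core (phi : Omega -> R[i]) (Aphi : A phi) (a b : R) :
  0 <= a -> a < b -> b <= 1 ->
  (forall G, FF G -> closure (@to_opc R @` (phi @` (G `&` supp v))) (to_opc a%:C)) ->
  (forall G, FF G -> closure (@to_opc R @` (phi @` (G `&` supp v))) (to_opc b%:C)) ->
  (forall c, (forall G, FF G -> closure (@to_opc R @` (phi @` (G `&` supp v))) c) ->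
     exists2 r, 0 <= r <= 1 & c = to_opc r%:C) ->
  False.
Proof.
move=> a0 ab b1 Ia Ib HI.
pose d0 := (b - a) / 8.
have d00 : 0 < d0 by rewrite divr_gt0 // subr_gt0.
have d0E : b - a = 8 * d0 by rewrite /d0; field.
pose t1 := a + 2 * d0; pose t2 := b - 2 * d0.
pose s1 := a + 3 * d0; pose s2 := b - 3 * d0.
have cre := cont_Re _ _ _ (Hcont _ Aphi).
pose Z1 := [set x | complex.Re (phi x) <= t2].
pose Z2 := [set x | t1 <= complex.Re (phi x)].
have ZZ1 : Z Z1 by apply: zs_le.
have ZZ2 : Z Z2 by apply: zs_ge.
have [F1 FF1 dF1] : exists2 F, FF F & (d (F `&` Z1) < D)%E.
  apply: claim => //.
  - move=> F FF0; have [|x [Fx _ hx]] := nearI _ _ _ (t2 - a) Ia FF0.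
      by rewrite subr_gt0 /t2; lra.
    exists x; split => //; rewrite /Z1 /=; have := re_close _ _ _ hx; lra.
  - move=> FZ1; have [|x [Zx _ hx]] := nearI _ _ _ (b - t2) Ib FZ1.
      by rewrite subr_gt0 /t2; lra.
    move: Zx; rewrite /Z1 /=; have := re_close _ _ _ hx; lra.
have [F2 FF2 dF2] : exists2 F, FF F & (d (F `&` Z2) < D)%E.
  apply: claim => //.
  - move=> F FF0; have [|x [Fx _ hx]] := nearI _ _ _ (b - t1) Ib FF0.
      by rewrite subr_gt0 /t1; lra.
    exists x; split => //; rewrite /Z2 /=; have := re_close _ _ _ hx; lra.
  - move=> FZ2; have [|x [Zx _ hx]] := nearI _ _ _ (t1 - a) Ia FZ2.
      by rewrite subr_gt0 /t1; lra.
    move: Zx; rewrite /Z2 /=; have := re_close _ _ _ hx; lra.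
pose F := F1 `&` F2.
have FF0 : FF F by apply: FF_I.
have [g1 Wg1 hg1] : exists2 g, W g & (wsnorm v p (F `&` Z1) (fun x => (f x - g x)%R) < D)%E.
  apply: wdist_lt; apply: le_lt_trans dF1; apply: wdist_le => x [[]]; by split.
have [g2 Wg2 hg2] : exists2 g, W g & (wsnorm v p (F `&` Z2) (fun x => (f x - g x)%R) < D)%E.
  apply: wdist_lt; apply: le_lt_trans dF2; apply: wdist_le => x [[]]; by split.
have [Dr eD] := D_fin _ Wg1.
rewrite eD in hg1 hg2.
have [r1 [er1 /andP[r10 r1D]]] := fin_lt _ _ (wsnorm_ge0 _ _ _ _ _ _ _) hg1.
have [r2 [er2 /andP[r20 r2D]]] := fin_lt _ _ (wsnorm_ge0 _ _ _ _ _ _ _) hg2.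
have e1r : forall x, F x -> Z1 x -> v x * p (f x - g1 x) <= r1.
  move=> x Fx Zx; rewrite -lee_fin -er1.
  exact: (@wsnorm_ub _ _ _ v p (F `&` Z1) (fun x => (f x - g1 x)%R) x).
have e2r : forall x, F x -> Z2 x -> v x * p (f x - g2 x) <= r2.
  move=> x Fx Zx; rewrite -lee_fin -er2.
  exact: (@wsnorm_ub _ _ _ v p (F `&` Z2) (fun x => (f x - g2 x)%R) x).
have [M1 [M10 HM1]] := bndM _ Wg1.
have [M2 [M20 HM2]] := bndM _ Wg2.
pose r := Num.max r1 r2; pose M := Num.max M1 M2.
have r0 : 0 <= r by rewrite le_max r10.
have rD : r < Dr by rewrite gt_max r1D r2D.
have M0 : 0 <= M by rewrite le_max M10.
have r1r : r1 <= r by rewrite le_max lexx.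
have r2r : r2 <= r by rewrite le_max lexx orbT.
have M1M : M1 <= M by rewrite le_max lexx.
have M2M : M2 <= M by rewrite le_max lexx orbT.
pose eta := (Dr - r) / (4 * (r + M + 1)).
have eta0 : 0 < eta by rewrite divr_gt0 ?subr_gt0 // mulr_gt0 //; lra.
have etaE : eta * (4 * (r + M + 1)) = Dr - r.
  by rewrite /eta; field; lra.
pose s := (1 + 2 * eta) * r + 2 * eta * M.
have sD : s < Dr.
  have : eta * r + eta * M + eta = (Dr - r) / 4 by rewrite -etaE; field.
  have : 0 <= eta * r by apply: mulr_ge0 => //; apply: ltW.
  rewrite /s; lra.
have s0 : 0 <= s.
  rewrite /s; apply: addr_ge0; apply: mulr_ge0 => //; [lra| apply: mulr_ge0; lra].
have s10 : 0 < s1 by rewrite /s1; lra.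
have s12 : s1 < s2 by rewrite /s1 /s2; lra.
have s21 : s2 <= 1 by rewrite /s2; lra.
have [[|n'] [[|m'] [//= _ _ Plo Phi]]] := poly_choice _ _ _ _ s10 s12 s21 eta0.
pose K := Kr R n' m'.
have K0 : 0 <= K := Kr_ge0 R n' m'.
pose dl := Num.min d0 (Num.min 1 (eta / (K + 1))).
have dl0 : 0 < dl.
  by rewrite /dl !lt_min d00 ltr01 divr_gt0 //; lra.
have dld0 : dl <= d0 by rewrite /dl ge_min lexx.
have dl1 : dl <= 1 by rewrite /dl !ge_min lexx orbT.
have Kdl : K * dl <= eta.
  have : dl <= eta / (K + 1) by rewrite /dl !ge_min lexx !orbT.
  rewrite ler_pdivlMr; last lra.
  have : 0 <= dl by apply: ltW.
  nra.
have [G FG HG] : exists2 G, FF G & forall x, G x -> supp v x ->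
    exists t, 0 <= t <= 1 /\ `|phi x - t%:C| < dl%:C.
  apply: contrapT => Hn.
  pose Bad := [set x | ~ exists t, 0 <= t <= 1 /\ `|phi x - t%:C| < dl%:C].
  have HB : forall G, FF G -> exists x, [/\ G x, supp v x & Bad x].
    move=> G FG; apply: contrapT => nx; apply: Hn; exists G => // x Gx sx.
    apply: contrapT => nt; apply: nx; exists x; split => //.
  have [|||c Hc] := @opc_cluster R _ FF
     (fun G => @to_opc R @` (phi @` (G `&` supp v `&` Bad))).
  - by exists setT; apply: FF_T.
  - move=> G1 G2 FG1 FG2; exists (G1 `&` G2); first exact: FF_I.
    by move=> _ [_ [x [[[g1x g2x] sx] bx] <-] <-]; split;
      exists (phi x) => //; exists x.
  - move=> G FG; have [x [Gx sx bx]] := HB G FG.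
    by exists (to_opc (phi x)); exists (phi x) => //; exists x.
  have [t t01 ct] : exists2 t, 0 <= t <= 1 & c = to_opc t%:C.
    apply: HI => G FG; apply: closureS (Hc G FG).
    by move=> _ [_ [x [[Gx sx] bx] <-] <-]; exists (phi x) => //; exists x.
  have := Hc setT FF_T; rewrite ct => /closure_opc /(_ dl dl0).
  move=> [_ [[x [[_ sx] bx] <-] hx]]; apply: bx; exists t; split => //.
  by rewrite distrC.
pose G' := G `&` F.
have FG' : FF G' by apply: FF_I.
pose psi := fun x => (1 - phi x ^+ n'.+1) ^+ m'.+1.
pose h := fun x => psi x *: g1 x + (1 - psi x) *: g2 x.
have Wh : W h by apply: (@mult_psi _ _ _ W phi n'.+1 m'.+1 (Hmult _ Aphi)).
have key : forall x, G' x -> v x * p (f x - h x) <= s.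
  move=> x [Gx Fx].
  have vx0 := vx_ge0 x.
  have [vx|vx] := eqVneq (v x) 0; first by rewrite vx mul0r.
  have sx : supp v x by apply: subset_closure.
  have [t [/andP[t0 t1'] hzt]] := HG x Gx sx.
  pose q := (1 - t ^+ n'.+1) ^+ m'.+1.
  have /andP[q0 q1] : 0 <= q <= 1 by apply: q_bounds; rewrite t0 t1'.
  have hpq : `|psi x - q%:C| <= eta%:C.
    apply: (le_trans (poly_cont _ _ _ _ _ _ _ _ _)).
    - by rewrite t0 t1'.
    - by apply: ltW; exact: hzt.
    - exact: dl1.
    by rewrite lecR.
  pose al1 := nr R (psi x); pose al2 := nr R (1 - psi x).
  have al10 : 0 <= al1 by apply: sqrtr_ge0.
  have al20 : 0 <= al2 by apply: sqrtr_ge0.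
  have hal1 : al1 <= q + eta.
    rewrite -lecR -nrE rmorphD.
    have -> : psi x = q%:C + (psi x - q%:C) by rewrite addrC subrK.
    apply: (le_trans (ler_normD _ _)); apply: lerD => //.
    by rewrite ger0_norm // ler0c.
  have hal2 : al2 <= 1 - q + eta.
    rewrite -lecR -nrE rmorphD rmorphB rmorph1.
    have -> : 1 - psi x = (1 - q%:C) - (psi x - q%:C) by rewrite opprB addrA subrK.
    apply: (le_trans (ler_normB _ _)); apply: lerD => //.
    have -> : 1 - q%:C = (1 - q)%:C by rewrite rmorphB rmorph1.
    by rewrite ger0_norm // ler0c subr_ge0.
  have eqh : f x - h x = psi x *: (f x - g1 x) + (1 - psi x) *: (f x - g2 x).
    have e : psi x + (1 - psi x) = 1 by rewrite addrC subrK.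
    by rewrite /h !scalerBr addrACA -scalerDl e scale1r opprD.
  pose e1 := v x * p (f x - g1 x); pose e2 := v x * p (f x - g2 x).
  have hE : v x * p (f x - h x) <= al1 * e1 + al2 * e2.
    rewrite eqh; apply: (le_trans (ler_wpM2l vx0 (semi_conv _ _ _ (Hsemi _ Ap) _ _ _))).
    by rewrite /e1 /e2 /al1 /al2; rewrite le_eqVlt; apply/orP; left; apply/eqP; ring.
  have e10 : 0 <= e1 by apply: mulr_ge0 => //; apply: p_ge0.
  have e20 : 0 <= e2 by apply: mulr_ge0 => //; apply: p_ge0.
  have e1M : e1 <= M by apply: le_trans M1M; apply: HM1.
  have e2M : e2 <= M by apply: le_trans M2M; apply: HM2.
  have hzt' : `|t%:C - phi x| < dl%:C by rewrite distrC.
  have /andP[hre1 hre2] := re_close _ _ _ hzt'.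
  apply: (@pw_final R _ _ _ _ _ _ _ _ _ (complex.Re (phi x)) t1 t2
     hE al10 al20 hal1 hal2 e10 e20 e1M e2M q0 q1 eta0 r0 M0).
  - move=> lo; split.
      by apply: Plo; rewrite t0 /=; exact: (@ar1 R _ _ _ _ _ hre1 lo dld0).
    apply: le_trans r1r; apply: e1r => //.
    by rewrite /Z1 /=; exact: (@ar3 R _ _ _ _ lo d0E d00).
  - move=> hi; split.
      by apply: Phi; rewrite t1' andbT; exact: (@ar2 R _ _ _ _ _ hre2 hi dld0).
    apply: le_trans r2r; apply: e2r => //.
    by rewrite /Z2 /=; exact: (@ar4 R _ _ _ _ hi d0E d00).
  - move=> m1 m2; split.
      by apply: le_trans r1r; apply: e1r.
    by apply: le_trans r2r; apply: e2r.
have := lbFF _ FG'; rewrite eD => H1.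
have H2 := @wdist_lb _ _ _ v p G' f W h Wh.
have H3 : (wsnorm v p G' (fun x => (f x - h x)%R) <= s%:E)%E.
  by apply: wsnorm_leP.
have := le_trans H1 (le_trans H2 H3); rewrite lee_fin; lra.
Qed.


Lemma anti : Av_antisymmetric A v FF.
Proof.
split; first exact: meetFF.
move=> phi Aphi I HI.
have HI' : forall c, (forall G, FF G -> closure (@to_opc R @` (phi @` (G `&` supp v))) c) ->
    exists2 r, 0 <= r <= 1 & c = to_opc r%:C.
  by move=> c Hc; have [r r01 <-] := HI c Hc; exists r.
have [|||c0 Hc0] := @opc_cluster R _ FF (fun G => @to_opc R @` (phi @` (G `&` supp v))).
- by exists setT; apply: FF_T.
- move=> G1 G2 FG1 FG2; exists (G1 `&` G2); first exact: FF_I.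
  by move=> _ [_ [x [[g1x g2x] sx] <-] <-]; split; exists (phi x) => //; exists x.
- move=> G FG; have [x [Gx sx]] := meetFF _ FG.
  by exists (to_opc (phi x)); exists (phi x) => //; exists x.
exists c0; apply/seteqP; split; last by move=> c ->.
move=> c Hc.
have [r r01 er] := HI' c Hc; have [r0 r001 er0] := HI' c0 Hc0.
move: r01 r001 => /andP[r0' r1] /andP[r00 r01].
have [lt|lt|eq] := ltrgtP r r0.
- exfalso; apply: (@core phi Aphi r r0 r0' lt r01).
  + by rewrite -er. + by rewrite -er0. + exact: HI'.
- exfalso; apply: (@core phi Aphi r0 r r00 lt r1).
  + by rewrite -er0. + by rewrite -er. + exact: HI'.
- by rewrite /= er er0 eq.
Qed.

End Anti.

Lemma mainZ (B0 : set (set Omega)) : is_zfilter R B0 ->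
  (forall F, B0 F -> (D <= d F)%E) ->
  (forall FF, is_zfilter R FF -> B0 `<=` FF -> (forall F, FF F -> (D <= d F)%E) ->
     forall F, FF F -> F `&` supp v !=set0) ->
  exists FF : set (set Omega),
    [/\ is_zfilter R FF,
        Av_antisymmetric A v FF,
        ereal_inf [set d F | F in FF] = D &
        forall EE : set (set Omega), is_zfilter R EE -> FF `<=` EE ->
          ereal_inf [set d E | E in EE] = D -> EE = FF].
Proof.
move=> zB0 lbB0 meetH.
pose P := fun FF : set (set Omega) => FF = set0 \/
  [/\ is_zfilter R FF, B0 `<=` FF & forall F, FF F -> (D <= d F)%E].
have [FF [PFF maxP]] : exists FF, P FF /\ forall B, FF `<` B -> ~ P B.
  apply: Zorn_bigcup => C CP tot.
  have [allE|] := pselect (forall Y, C Y -> Y = set0).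
    left; apply/seteqP; split => // Z' [Y CA AZ]; by rewrite (allE _ CA) in AZ.
  move=> /existsNP [A0 /not_implyP [CA0 A0ne]].
  have val : forall Y, C Y -> forall Z', Y Z' ->
      [/\ is_zfilter R Y, B0 `<=` Y & forall F, Y F -> (D <= d F)%E].
    move=> Y CA Z' AZ; case: (CP _ CA) => // A0e; by rewrite A0e in AZ.
  have /set0P [z0 A0z] : A0 != set0 by apply/eqP.
  have [zA0 B0A0 lbA0] := val _ CA0 _ A0z.
  right; split.
  - split.
    + move=> Z' [Y CA AZ]; have [[h _ _ _ _] _ _] := val _ CA _ AZ; exact: h AZ.
    + by exists z0, A0.
    + move=> [Y CA AZ]; have [[_ _ h _ _] _ _] := val _ CA _ AZ; exact: h.
    + move=> Z1 Z2 [A1 CA1 Z1A] [A2 CA2 Z2A].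
      have [s12|s21] := tot _ _ CA1 CA2.
      * exists A2 => //; have [[_ _ _ h _] _ _] := val _ CA2 _ Z2A; apply: h => //.
        exact: s12.
      * exists A1 => //; have [[_ _ _ h _] _ _] := val _ CA1 _ Z1A; apply: h => //.
        exact: s21.
    + move=> Z' Z'' [Y CA AZ] ZZ sub; exists Y => //.
      have [[_ _ _ _ h] _ _] := val _ CA _ AZ; exact: h AZ ZZ sub.
  - by move=> Z' B0Z; exists A0 => //; apply: B0A0.
  - by move=> F [Y CA AF]; have [_ _ h] := val _ CA _ AF; exact: h.
have FFne : FF <> set0.
  move=> FF0; apply: (maxP B0); last by right; split.
  rewrite FF0; split => // H; case: zB0 => _ [Z0 BZ0] _ _ _; exact: H _ BZ0.
have [zFF B0FF lbFF] : [/\ is_zfilter R FF, B0 `<=` FF & forall F, FF F -> (D <= d F)%E].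
  by case: PFF.
have maxFF : forall EE, is_zfilter R EE -> FF `<=` EE ->
    (forall E, EE E -> (D <= d E)%E) -> EE = FF.
  move=> EE zEE sub lb; apply: contrapT => ne; apply: (maxP EE).
    split => // EF; apply: ne; apply/seteqP; split => //.
  right; split => //; exact: subset_trans B0FF sub.
have meetFF := meetH FF zFF B0FF lbFF.
have infE : ereal_inf [set d F | F in FF] = D.
  apply/eqP; rewrite eq_le; apply/andP; split.
  - by apply: ereal_inf_lbound; exists setT => //; apply: FF_T.
  - by apply: le_ereal_inf_tmp => _ [F FFF <-]; exact: lbFF.
exists FF; split => //.
- exact: (anti _ zFF lbFF meetFF maxFF).
- move=> EE zEE sub infEE; apply: maxFF => // E EE_E; rewrite -infEE.
  by apply: ereal_inf_lbound; exists E.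
Qed.

End Main.

End Aux.
Import Aux.

Theorem theorem2p7 (R : realType) (Omega : topologicalType)
  (X : lmodType R[i]) (AA : set (X -> R))
  (V : set (Omega -> R)) (A : set (Omega -> R[i]))
  (W : set (Omega -> X)) (f : Omega -> X) :
  (forall p, AA p -> is_seminorm p) ->
  (forall v, V v -> forall x, 0 <= v x) ->
  (forall phi, A phi -> continuousC phi) ->
  (forall phi, A phi -> is_multiplier W phi) ->
  (forall g, W g -> FVb V AA (fun x => f x - g x)) ->
  forall p v, AA p -> V v ->
  (exists x, v x != 0) ->
  exists FF : set (set Omega),
    [/\ is_zfilter R FF,
        Av_antisymmetric A v FF,
        ereal_inf [set wdist v p F f W | F in FF] = wdist v p [set: Omega] f W &
        forall EE : set (set Omega), is_zfilter R EE -> FF `<=` EE ->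
          ereal_inf [set wdist v p E f W | E in EE] = wdist v p [set: Omega] f W ->
          EE = FF].

Proof.
move=> Hsemi Hv Hcont Hmult HFV p v Ap Vv [x0 vx0].
have x0s : supp v x0 by apply: subset_closure; exact: vx0.
have Dge0 := @wdist_ge0 R Omega X v p setT f W.
have [HD|HD] := pselect (wdist v p setT f W = 0%E \/ wdist v p setT f W = +oo%E).
- pose B0 := [set Z' : set Omega | zero_sets R Z' /\ Z' x0].
  apply: (@mainZ R Omega X AA V A W f Hsemi Hv Hcont Hmult HFV p v Ap Vv B0).
  + split.
    * by move=> Z' [].
    * by exists setT; split => //; apply: zsT.
    * by move=> [_].
    * by move=> Z1 Z2 [z1 x1] [z2 x2]; split; [exact: zsI|].
    * by move=> Z' Z'' [_ x1] zz sub; split => //; exact: sub.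
  + move=> F _; case: HD => [->|Doo]; first exact: wdist_ge0.
    by rewrite Doo wdist_empty //; apply: (@D_inf_W R Omega X AA V W f HFV p v Ap Vv).
  + move=> FF zFF B0FF lbFF F FFF; exists x0; split => //.
    apply: contrapT => nF; case: zFF => sub ne n0 inter up.
    have [h ch Fe] := sub F FFF.
    pose Z' := [set x | h x = h x0].
    have B0Z : B0 Z' by split => //; exact: zs_level.
    have FZ := inter _ _ FFF (B0FF _ B0Z).
    apply: n0; suff <- : F `&` Z' = set0 by [].
    apply/seteqP; split => // x [Fx Zx]; apply: nF.
    move: Fx; rewrite -Fe /= => hx; by rewrite -Zx.
- pose B0 := [set (setT : set Omega)].
  apply: (@mainZ R Omega X AA V A W f Hsemi Hv Hcont Hmult HFV p v Ap Vv B0).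
  + split.
    * by move=> _ ->; exact: zsT.
    * by exists setT.
    * by move=> /= h; have : (set0 : set Omega) x0 by rewrite h.
    * by move=> _ _ -> ->; rewrite /= setTI.
    * move=> _ Z'' -> _ sub; apply/seteqP; split => // x _; exact: sub.
  + by move=> _ ->.
  + move=> FF zFF B0FF lbFF F FFF; apply: contrapT => nm.
    have [g Wg] : exists g, W g.
      apply: contrapT => nW; apply: HD; right; apply: wdist_empty.
      by apply/seteqP; split => // g Wg; apply: nW; exists g.
    have H1 := lbFF F FFF.
    have H2 := @wdist_lb R Omega X v p F f W g Wg.
    have H3 : (wsnorm v p F (fun x => (f x - g x)%R) <= 0%:E)%E.
      apply: wsnorm_leP => // x Fx.
      have [vx|vx] := eqVneq (v x) 0; first by rewrite vx mul0r.
      exfalso; apply: nm; exists x; split => //; apply: subset_closure; exact: vx.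
    apply: HD; left; apply/eqP; rewrite eq_le Dge0 andbT.
    exact: le_trans H1 (le_trans H2 H3).
Qed.
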